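(* For every integer $n\geq 2$, there is a binary tree with $n$ leaves, all at depth $\lceil \log n \rceil$, and at most $2n+\lceil \log n \rceil-2$ vertices.
   Context: A binary tree is a rooted tree in which every vertex has at most two children. The depth of a vertex is its distance from the root. $\log$ denotes the logarithm to base $2$. *)

(* Defs.v *)
From mathcomp Require Import all_boot.
Set Implicit Arguments. Unset Strict Implicit. Unset Printing Implicit Defensive.

Inductive btree : Type :=
| Lf : btree
| N1 : btree -> btree
| N2 : btree -> btree -> btree.

Fixpoint nvert (t : btree) : nat :=
  match t with
  | Lf => 1
  | N1 l => (nvert l).+1
  | N2 l r => (nvert l + nvert r).+1
  end.

Fixpoint nleaves (t : btree) : nat :=
  match t with
  | Lf => 1
  | N1 l => nleaves l
  | N2 l r => nleaves l + nleaves r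
  end.

Fixpoint leaf_depths (t : btree) : seq nat :=
  match t with
  | Lf => [:: 0]
  | N1 l => map S (leaf_depths l)
  | N2 l r => map S (leaf_depths l ++ leaf_depths r)
  end.

(* ceil (log_2 n) for n >= 1: the least e with n <= 2^e *)
Definition ceil_log2 (n : nat) : nat := up_log 2 n.

(* Main.v *)
Require Import Defs.
From mathcomp Require Import all_boot.
From mathcomp Require Import zify.

Lemma allS (d : nat) (s : seq nat) :
  all (fun x => x == d.+1) (map S s) = all (fun x => x == d) s.
Proof. by rewrite all_map; apply: eq_all => x /=; rewrite eqSS. Qed.

Lemma full_tree (d : nat) : exists t : btree,
  [/\ nleaves t = 2 ^ d, all (fun x => x == d) (leaf_depths t)
    & (nvert t).+1 = 2 * 2 ^ d].
Proof.
elim: d => [|d [t [H1 H2 H3]]]; first by exists Lf.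
exists (N2 t t); split => /=.
- by rewrite H1 expnS; lia.
- by rewrite allS all_cat H2.
- rewrite expnS; lia.
Qed.

Lemma gen_tree (d : nat) : forall n, 1 <= n <= 2 ^ d -> exists t : btree,
  [/\ nleaves t = n, all (fun x => x == d) (leaf_depths t)
    & nvert t + 1 <= 2 * n + d].
Proof.
elim: d => [|d IH] n /andP[n1 n2].
  have -> : n = 1 by move: n2; rewrite expn0; lia.
  by exists Lf.
case: (leqP n (2 ^ d)) => hn.
  have [t [H1 H2 H3]] := IH n (introT andP (conj n1 hn)).
  exists (N1 t); split => /=; [by [] | by rewrite allS | lia].
have [f [F1 F2 F3]] := full_tree d.
have hb : 1 <= n - 2 ^ d <= 2 ^ d by move: n2; rewrite expnS; lia.
have [t [H1 H2 H3]] := IH _ hb.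
exists (N2 f t); split => /=.
- rewrite F1 H1; lia.
- by rewrite allS all_cat F2 H2.
- lia.
Qed.

Theorem lemma2p1 (n : nat) : 2 <= n ->
  exists t : btree,
    [/\ nleaves t = n,
        all (fun d => d == ceil_log2 n) (leaf_depths t)
      & nvert t <= 2 * n + ceil_log2 n - 2].
Proof.
move=> n2.
rewrite /ceil_log2.
have hup := @up_logP 2 n isT.
have hlo := @up_log_gtn 2 n isT n2.
have hpos : 0 < up_log 2 n by rewrite up_log_gt0 n2.
move: hup hlo hpos.
case: (up_log 2 n) => [|d] // hup hlo _ /=.
have [f [F1 F2 F3]] := full_tree d.
have hb : 1 <= n - 2 ^ d <= 2 ^ d by move: hup hlo; rewrite expnS /=; lia.
have [t [H1 H2 H3]] := @gen_tree d _ hb.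
exists (N2 f t); split => /=.
- rewrite F1 H1; move: hlo => /=; lia.
- by rewrite allS all_cat F2 H2.
- move: hlo => /=; lia.
Qed.
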